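(* The minimal functor $\mathcal M_{\min}$ is (admits the structure of) a lax monoidal functor from $(\mathbf{Ord},\times,(\mathbf 1,=))$ to $(\mathbf{Set},\times,\mathbf 1)$.
   Context: $\mathbf{Ord}$ is the category of posets and monotone maps, with cartesian product $\times$ (product order) and the one-point poset $\mathbf 1$; $\mathbf{Set}$ has the cartesian monoidal structure. For a poset $X$, $\mathcal M(X)$ is the set of nonempty finite subsets of $X$ whose elements are pairwise incomparable. For $S\subseteq X$, $S_{\circ}$ denotes the set of minimal elements of $S$. The minimal functor $\mathcal M_{\min}:\mathbf{Ord}\to\mathbf{Set}$ is given by $\mathcal M_{\min}(X)=\mathcal M(X)$ (as a set) and $\mathcal M_{\min}(f)(S)=(f(S))_{\circ}$ for monotone $f:X\to Y$. *)

(* Defs.v *)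
From Stdlib Require Import List Classical.

Record Poset := {
  carrier :> Type;
  le : carrier -> carrier -> Prop;
  le_refl : forall x, le x x;
  le_trans : forall x y z, le x y -> le y z -> le x z;
  le_antisym : forall x y, le x y -> le y x -> x = y
}.
Arguments le {p} _ _.

Record Mono (X Y : Poset) := {
  mfun :> X -> Y;
  mfun_mono : forall x y, le x y -> le (mfun x) (mfun y)
}.

Definition mid (X : Poset) : Mono X X := {| mfun := fun x => x; mfun_mono := fun _ _ h => h |}.

Definition mcomp {X Y Z : Poset} (g : Mono Y Z) (f : Mono X Y) : Mono X Z :=
  {| mfun := fun x => g (f x);
     mfun_mono := fun x y h => mfun_mono _ _ g _ _ (mfun_mono _ _ f _ _ h) |}.

Definition PProd (X Y : Poset) : Poset.
Proof.
  refine {| carrier := (X * Y)%type;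
            le := fun p q => le (fst p) (fst q) /\ le (snd p) (snd q) |}.
  - intros [a b]; split; apply le_refl.
  - intros [a b] [c d] [e f] [h1 h2] [h3 h4]; split; eapply le_trans; eauto.
  - intros [a b] [c d] [h1 h2] [h3 h4]; simpl in *.
    f_equal; apply le_antisym; auto.
Defined.

Definition One : Poset.
Proof.
  refine {| carrier := unit; le := fun x y => x = y |}.
  - reflexivity.
  - intros; subst; reflexivity.
  - intros; assumption.
Defined.

Definition mprod {X X' Y Y' : Poset} (f : Mono X X') (g : Mono Y Y') :
  Mono (PProd X Y) (PProd X' Y').
Proof.
  refine {| mfun := fun p : PProd X Y => ((f (fst p), g (snd p)) : PProd X' Y') |}.
  intros [a b] [c d] [h1 h2]; split; simpl; apply mfun_mono; assumption.
Defined.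

Definition massoc (X Y Z : Poset) : Mono (PProd (PProd X Y) Z) (PProd X (PProd Y Z)).
Proof.
  refine {| mfun := fun p : PProd (PProd X Y) Z =>
              ((fst (fst p), (snd (fst p), snd p)) : PProd X (PProd Y Z)) |}.
  intros [[a b] c] [[d e] f] [[h1 h2] h3]; simpl in *; repeat split; assumption.
Defined.

Definition mlunit (X : Poset) : Mono (PProd One X) X.
Proof.
  refine {| mfun := fun p : PProd One X => snd p |}.
  intros [a b] [c d] [h1 h2]; exact h2.
Defined.

Definition mrunit (X : Poset) : Mono (PProd X One) X.
Proof.
  refine {| mfun := fun p : PProd X One => fst p |}.
  intros [a b] [c d] [h1 h2]; exact h1.
Defined.

Definition finite_set {T : Type} (S : T -> Prop) : Prop :=
  exists l : list T, forall x, S x -> In x l.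

Definition isM {X : Poset} (S : X -> Prop) : Prop :=
  (exists x, S x) /\ finite_set S /\
  (forall x y, S x -> S y -> x <> y -> ~ le x y).

Definition MM (X : Poset) : Type := { S : X -> Prop | isM S }.

Definition minset {X : Poset} (S : X -> Prop) : X -> Prop :=
  fun x => S x /\ forall y, S y -> le y x -> y = x.

Definition image {X Y : Type} (f : X -> Y) (S : X -> Prop) : Y -> Prop :=
  fun y => exists x, S x /\ f x = y.

Lemma finite_has_min_below (X : Poset) (l : list X) :
  forall P : X -> Prop, (forall x, P x -> In x l) ->
  forall x, P x -> exists m, minset P m /\ le m x.
Proof.
  induction l as [|a l IH]; intros P HP x Px.
  - destruct (HP x Px).
  - set (P' := fun y => P y /\ y <> a).
    assert (HP' : forall y, P' y -> In y l).
    { intros y [Py Hy]; destruct (HP y Py); [congruence|assumption]. }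
    destruct (classic (exists y, P' y /\ le y x)) as [[y [Py' Hyx]]|Hno].
    + destruct (IH P' HP' y Py') as [m [[Pm' Hmin] Hmy]].
      destruct (classic (P a /\ le a m)) as [[Pa Ham]|Hnam].
      * exists a; split; [split; [exact Pa|]|].
        -- intros z Pz Hza.
           destruct (classic (z = a)) as [->|Hz]; [reflexivity|].
           assert (z = m) by (apply Hmin; [split; assumption| eapply le_trans; eauto]).
           subst z. exfalso. apply (proj2 Pm'). apply le_antisym; assumption.
        -- eapply le_trans; [exact Ham| eapply le_trans; eauto].
      * exists m; split; [split; [exact (proj1 Pm')|]|].
        -- intros z Pz Hzm.
           destruct (classic (z = a)) as [->|Hz].
           ++ exfalso; apply Hnam; split; assumption.
           ++ apply Hmin; [split; assumption|assumption].
        -- eapply le_trans; eauto.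
    + assert (x = a).
      { destruct (classic (x = a)) as [h|h]; [exact h|].
        exfalso; apply Hno; exists x; split; [split; assumption| apply le_refl]. }
      exists x; split; [split; [exact Px|]| apply le_refl].
      intros z Pz Hzx.
      destruct (classic (z = a)) as [h|h]; [congruence|].
      exfalso; apply Hno; exists z; split; [split; assumption|assumption].
Qed.

Lemma isM_minset_image {X Y : Poset} (f : Mono X Y) (S : X -> Prop) :
  isM S -> isM (minset (image f S)).
Proof.
  intros [[x Sx] [[l Hl] Hac]].
  assert (Hfin : forall y, image f S y -> In y (map f l)).
  { intros y [z [Sz <-]]. apply in_map. auto. }
  split; [|split].
  - destruct (finite_has_min_below Y (map f l) (image f S) Hfin (f x)) as [m [Hm _]].
    + exists x; split; auto.
    + exists m; exact Hm.
  - exists (map f l); intros y [Hy _]; auto.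
  - intros a b [Ha _] [Hb Hbmin] Hab Hle. apply Hab. apply Hbmin; assumption.
Qed.

Definition Mmin {X Y : Poset} (f : Mono X Y) (S : MM X) : MM Y :=
  exist _ (minset (image f (proj1_sig S))) (isM_minset_image f (proj1_sig S) (proj2_sig S)).

(* Main.v *)
Require Import Defs.
From Stdlib Require Import List Classical FunctionalExtensionality PropExtensionality ProofIrrelevance.

Lemma MM_eq (X : Poset) (A B : MM X) :
  (forall x, proj1_sig A x <-> proj1_sig B x) -> A = B.
Proof.
  destruct A as [A HA], B as [B HB]; simpl; intros H.
  assert (A = B) by (apply functional_extensionality; intro x; apply propositional_extensionality; auto).
  subst B. f_equal. apply proof_irrelevance.
Qed.

Lemma minset_anti (X : Poset) (P : X -> Prop) :
  (forall x y, P x -> P y -> x <> y -> ~ le x y) -> forall x, minset P x <-> P x.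
Proof.
  intros H x; split; [intros [h _]; exact h|].
  intros Px; split; [exact Px|]. intros y Py Hle.
  destruct (classic (y = x)) as [e|n]; [exact e|]. exfalso; exact (H y x Py Px n Hle).
Qed.

Lemma minset_ext (X : Poset) (P Q : X -> Prop) :
  (forall x, P x <-> Q x) -> forall x, minset P x <-> minset Q x.
Proof.
  intros H x; unfold minset; split; intros [h1 h2]; split; try (apply H; exact h1);
  intros y Hy; apply h2; apply H; exact Hy.
Qed.

Definition prodP {X Y : Poset} (S : X -> Prop) (T : Y -> Prop) : PProd X Y -> Prop :=
  fun p => S (fst p) /\ T (snd p).

Lemma isM_prod {X Y : Poset} (S : X -> Prop) (T : Y -> Prop) :
  isM S -> isM T -> isM (prodP S T).
Proof.
  intros [[x Sx] [[l1 H1] A1]] [[y Ty] [[l2 H2] A2]].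
  split; [|split].
  - exists ((x, y) : PProd X Y); split; assumption.
  - exists (list_prod l1 l2). intros [a b] [Ha Hb]; apply in_prod; auto.
  - intros [a b] [c d] [Sa Tb] [Sc Td] Hne [h1 h2]; simpl in *.
    destruct (classic (a = c)) as [e|n].
    + subst c. destruct (classic (b = d)) as [e|n2].
      * subst; apply Hne; reflexivity.
      * exact (A2 b d Tb Td n2 h2).
    + exact (A1 a c Sa Sc n h1).
Qed.

Definition mu (X Y : Poset) (p : (MM X * MM Y)%type) : MM (PProd X Y) :=
  exist _ (prodP (proj1_sig (fst p)) (proj1_sig (snd p)))
    (isM_prod _ _ (proj2_sig (fst p)) (proj2_sig (snd p))).

Lemma isM_one : @isM One (fun _ => True).
Proof.
  split; [exists tt; exact I|split].
  - exists (tt :: nil). intros [] _; left; reflexivity.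
  - intros [] [] _ _ h; exfalso; apply h; reflexivity.
Qed.

Definition eps (u : unit) : MM One := exist _ (fun _ => True) isM_one.

Lemma anti_of (X : Poset) (S : MM X) :
  forall x y, proj1_sig S x -> proj1_sig S y -> x <> y -> ~ le x y.
Proof. destruct (proj2_sig S) as [_ [_ H]]; exact H. Qed.

Lemma comp_min (X Y Z : Poset) (f : Mono X Y) (g : Mono Y Z) (S : MM X) :
  forall z, minset (image (mcomp g f) (proj1_sig S)) z <->
            minset (image g (minset (image f (proj1_sig S)))) z.
Proof.
  destruct S as [S HS]; simpl; destruct HS as [_ [[l Hl] _]].
  assert (Hfin : forall y, image f S y -> In y (map f l)).
  { intros y [x [Sx <-]]. apply in_map; auto. }
  intro z; split.
  - intros [[x [Sx Hx]] Hmin]; simpl in Hx.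
    destruct (finite_has_min_below Y _ _ Hfin (f x)) as [m [Hm Hmx]].
    { exists x; split; auto. }
    assert (Hgm : g m = z).
    { apply Hmin.
      - destruct Hm as [[x' [Sx' <-]] _]. exists x'; split; auto.
      - rewrite <- Hx. apply mfun_mono; exact Hmx. }
    split.
    + exists m; split; auto.
    + intros w [m' [Hm' <-]] Hle. apply Hmin; auto.
      destruct Hm' as [[x' [Sx' <-]] _]. exists x'; split; auto.
  - intros [[m [Hm Hgm]] Hmin]. split.
    + destruct Hm as [[x [Sx Hfx]] _]. exists x; split; auto. simpl; rewrite Hfx; auto.
    + intros w [x [Sx Hw]] Hle; simpl in Hw.
      destruct (finite_has_min_below Y _ _ Hfin (f x)) as [m' [Hm' Hm'x]].
      { exists x; split; auto. }
      assert (Hgm' : g m' = z).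
      { apply Hmin.
        - exists m'; split; auto.
        - eapply le_trans; [apply mfun_mono; exact Hm'x|]. rewrite Hw; exact Hle. }
      apply le_antisym; auto.
      rewrite <- Hgm'. rewrite <- Hw. apply mfun_mono; auto.
Qed.

Theorem propositionD20 :
  (forall (X : Poset) (S : MM X), Mmin (mid X) S = S) /\
  (forall (X Y Z : Poset) (f : Mono X Y) (g : Mono Y Z) (S : MM X),
      Mmin (mcomp g f) S = Mmin g (Mmin f S)) /\
  exists (eps : unit -> MM One)
         (mu : forall X Y : Poset, (MM X * MM Y)%type -> MM (PProd X Y)),
    (forall (X X' Y Y' : Poset) (f : Mono X X') (g : Mono Y Y') (S : MM X) (T : MM Y),
        Mmin (mprod f g) (mu X Y (S, T)) = mu X' Y' (Mmin f S, Mmin g T)) /\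
    (forall (X Y Z : Poset) (S : MM X) (T : MM Y) (U : MM Z),
        Mmin (massoc X Y Z) (mu (PProd X Y) Z (mu X Y (S, T), U))
        = mu X (PProd Y Z) (S, mu Y Z (T, U))) /\
    (forall (X : Poset) (S : MM X), Mmin (mlunit X) (mu One X (eps tt, S)) = S) /\
    (forall (X : Poset) (S : MM X), Mmin (mrunit X) (mu X One (S, eps tt)) = S).
Proof.
  split; [|split].
  - intros X S. apply MM_eq; intro x; simpl.
    rewrite (minset_ext X _ (proj1_sig S)).
    + apply minset_anti, anti_of.
    + intro y; split; [intros [z [Sz <-]]; exact Sz| intros Sy; exists y; split; auto].
  - intros. apply MM_eq; intro z; simpl. apply comp_min.
  - exists eps, mu. split; [|split; [|split]].
    + intros X X' Y Y' f g S T. apply MM_eq; intros [a b]; simpl.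
      unfold prodP; simpl. split.
      * intros [[[x y] [[Sx Ty] He]] Hmin]; simpl in *.
        injection He; intros <- <-. split.
        -- split; [exists x; split; auto|].
           intros a' [x' [Sx' <-]] Hle.
           assert (H := Hmin ((f x', g y) : PProd X' Y')).
           refine (f_equal fst (H _ _)).
           ++ exists ((x', y) : PProd X Y); split; [split; auto|reflexivity].
           ++ split; simpl; [exact Hle| apply le_refl].
        -- split; [exists y; split; auto|].
           intros b' [y' [Ty' <-]] Hle.
           assert (H := Hmin ((f x, g y') : PProd X' Y')).
           refine (f_equal snd (H _ _)).
           ++ exists ((x, y') : PProd X Y); split; [split; auto|reflexivity].
           ++ split; simpl; [apply le_refl| exact Hle].
      * intros [[[x [Sx Hx]] Ha] [[y [Ty Hy]] Hb]]. split.
        -- exists ((x, y) : PProd X Y); split; [split; auto|].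
           simpl; rewrite Hx, Hy; reflexivity.
        -- intros [a' b'] [[x' y'] [[Sx' Ty'] He]] [h1 h2]; simpl in *.
           injection He; intros Hb' Ha'.
           rewrite (Ha a'), (Hb b'); auto.
           ++ exists y'; split; auto.
           ++ exists x'; split; auto.
    + intros X Y Z S T U. apply MM_eq; intro p; simpl.
      rewrite (minset_ext _ _ (proj1_sig (mu X (PProd Y Z) (S, mu Y Z (T, U))))).
      * apply minset_anti; exact (anti_of _ (mu X (PProd Y Z) (S, mu Y Z (T, U)))).
      * intros [a [b c]]; simpl; unfold prodP; simpl. split.
        -- intros [[[x y] z] [[[Sx Ty] Uz] He]]; simpl in *.
           injection He; intros; subst; auto.
        -- intros [Sa [Tb Uc]]. exists (((a, b), c) : PProd (PProd X Y) Z).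
           simpl; unfold prodP; simpl; auto.
    + intros X S. apply MM_eq; intro x; simpl.
      rewrite (minset_ext X _ (proj1_sig S)).
      * apply minset_anti, anti_of.
      * intro y; split.
        -- intros [[u z] [[_ Sz] He]]; simpl in *; subst; exact Sz.
        -- intros Sy. exists ((tt, y) : PProd One X); simpl; unfold prodP; simpl; auto.
    + intros X S. apply MM_eq; intro x; simpl.
      rewrite (minset_ext X _ (proj1_sig S)).
      * apply minset_anti, anti_of.
      * intro y; split.
        -- intros [[z u] [[Sz _] He]]; simpl in *; subst; exact Sz.
        -- intros Sy. exists ((y, tt) : PProd X One); simpl; unfold prodP; simpl; auto.
Qed.
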